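(* Let $\mathcal H=(V,E)$ be a hypergraph with splitting functions, let $R\subseteq V$, $\varepsilon>0$ and $\alpha>0$. Then the set $S_L$ returned by Algorithm 2 satisfies $$S_L\in\arg\min_{S\subseteq V}\mathrm{Hstcut}_\alpha(S).$$
   Context: A hypergraph $\mathcal H=(V,E)$ has a finite node set $V$, and each hyperedge $e\in E$ is a subset of $V$. Each hyperedge $e$ carries a splitting function $w_e:2^e\to\mathbb R_{\ge0}$ satisfying $w_e(A)=w_e(e\setminus A)$ for all $A\subseteq e$ and $w_e(\emptyset)=w_e(e)=0$. For $S\subseteq V$, $\mathrm{cut}_{\mathcal H}(S)=\sum_{e\in E}w_e(e\cap S)$. The degree of $v$ is $d_v=\sum_{e\ni v}w_e(\{v\})$, and $\mathrm{vol}(S)=\sum_{v\in S}d_v$. Write $\bar S=V\setminus S$. For $\alpha>0$, $\mathrm{Hstcut}_\alpha(S)=\mathrm{cut}_{\mathcal H}(S)+\alpha\,\mathrm{vol}(\bar S\cap R)+\alpha\varepsilon\,\mathrm{vol}(S\cap\bar R)$. This is the $s$-$t$ cut value of $S\cup\{s\}$ in the hypergraph $\mathcal H_\alpha$ obtained from $\mathcal H$ by adding terminal edges $(s,r)$ of weight $\alpha d_r$ for $r\in R$ and $(j,t)$ of weight $\alpha\varepsilon d_j$ for $j\in\bar R$. Neighborhood notation: $E(v)=\{e\in E: v\in e\}$ and $E(S)=\bigcup_{v\in S}E(v)$. Also $\mathcal N(v)=\{u: \exists e\in E,\ u,v\in e\}$ and $\mathcal N(S)=\bigcup_{v\in S}\mathcal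 N(v)$. A local hypergraph is given by a node set $V_L\subseteq V$ and a hyperedge set $E_L\subseteq E$, with every $e\in E_L$ contained in $V_L$. Every node of $V_L$ keeps its terminal edge. For $S\subseteq V_L$, its cut value is $$\mathrm{Lstcut}_\alpha(S)=\sum_{e\in E_L}w_e(e\cap S)+\alpha\sum_{v\in V_L\cap R,\,v\notin S}d_v+\alpha\varepsilon\sum_{v\in V_L\cap\bar R,\,v\in S}d_v.$$ Algorithm 2 works as follows. Initialize $V_L=R\cup\mathcal N(R)$, $E_L=E(R)$, and $X=\emptyset$. Then repeat: 1. Compute $S_L\in\arg\min_{S\subseteq V_L}\mathrm{Lstcut}_\alpha(S)$. 2. Set $N=(S_L\cap\bar R)\setminus X$. 3. Update $V_L\leftarrow V_L\cup\mathcal N(N)$, $E_L\leftarrow E_L\cup E(N)$, and $X\leftarrow X\cup N$. Stop when $N=\emptyset$ and return $S_L$. *)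

(* Defs.v *)
From HB Require Import structures.
From mathcomp Require Import all_boot all_order all_algebra.
Set Implicit Arguments. Unset Strict Implicit. Unset Printing Implicit Defensive.
Import Order.TTheory GRing.Theory Num.Theory.
Local Open Scope ring_scope.

(* Splitting
   functions [w e : {set V} -> R], only meaningful on subsets of [edge e]. *)

Section Hyper.
Variables (R : realFieldType) (V E : finType) (edge : E -> {set V})
          (w : E -> {set V} -> R).

Definition splitting_functions : Prop :=
  forall e : E,
    [/\ (forall A : {set V}, A \subset edge e -> 0 <= w e A),
        (forall A : {set V}, A \subset edge e -> w e A = w e (edge e :\: A)),
        w e set0 = 0 & w e (edge e) = 0].

Definition hcut (S : {set V}) : R := \sum_(e : E) w e (edge e :&: S).

Definition deg (v : V) : R := \sum_(e : E | v \in edge e) w e [set v].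

Definition vol (S : {set V}) : R := \sum_(v in S) deg v.

Variables (Rs : {set V}) (alpha eps : R).

Definition Hstcut (S : {set V}) : R :=
  hcut S + alpha * vol (~: S :&: Rs) + alpha * eps * vol (S :&: ~: Rs).

Definition edges_of (S : {set V}) : {set E} :=
  [set e | [exists v in S, v \in edge e]].

Definition nbhd (S : {set V}) : {set V} :=
  [set u | [exists e : E, [exists v in S, (u \in edge e) && (v \in edge e)]]].

Definition Lstcut (VL : {set V}) (EL : {set E}) (S : {set V}) : R :=
  \sum_(e in EL) w e (edge e :&: S)
  + alpha * \sum_(v in VL :&: Rs :\: S) deg v
  + alpha * eps * \sum_(v in VL :&: ~: Rs :&: S) deg v.

Definition local_argmin (VL : {set V}) (EL : {set E}) (SL : {set V}) : Prop :=
  SL \subset VL /\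
  forall S : {set V}, S \subset VL -> Lstcut VL EL SL <= Lstcut VL EL S.

(* [alg2_returns VL EL X SL]: starting the loop of Algorithm 2 from state
   (VL, EL, X), some execution (with any choice of minimizers) stops and
   returns SL. *)
Inductive alg2_returns : {set V} -> {set E} -> {set V} -> {set V} -> Prop :=
| alg2_stop VL EL X SL :
    local_argmin VL EL SL ->
    (SL :&: ~: Rs) :\: X = set0 ->
    alg2_returns VL EL X SL
| alg2_step VL EL X SL SL' :
    local_argmin VL EL SL ->
    (SL :&: ~: Rs) :\: X != set0 ->
    alg2_returns (VL :|: nbhd ((SL :&: ~: Rs) :\: X))
                 (EL :|: edges_of ((SL :&: ~: Rs) :\: X))
                 (X :|: ((SL :&: ~: Rs) :\: X)) SL' ->
    alg2_returns VL EL X SL'.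

Definition alg2_output (SL : {set V}) : Prop :=
  alg2_returns (Rs :|: nbhd Rs) (edges_of Rs) set0 SL.

End Hyper.

(* Main.v *)
Require Import Defs.
From HB Require Import structures.
From mathcomp Require Import all_boot all_order all_algebra.
Import Order.TTheory GRing.Theory Num.Theory.
Local Open Scope ring_scope.

Section Proof.
Variables (R : realFieldType) (V E : finType) (edge : E -> {set V})
          (w : E -> {set V} -> R) (Rs : {set V}) (eps alpha : R).
Hypothesis hw : splitting_functions edge w.
Hypothesis heps : 0 < eps.
Hypothesis halpha : 0 < alpha.

Lemma deg_ge0 v : 0 <= deg edge w v.
Proof.
rewrite /deg; apply: sumr_ge0 => e ve.
by case: (hw e) => h _ _ _; apply: h; rewrite sub1set.
Qed.

Lemma sum_sub_le (A B : {set V}) (f : V -> R) :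
  A \subset B -> (forall v, 0 <= f v) ->
  \sum_(v in A) f v <= \sum_(v in B) f v.
Proof.
move=> sAB f0; rewrite [X in _ <= X](big_setID A) /=.
rewrite (setIidPr sAB) lerDl; exact: sumr_ge0.
Qed.

Lemma edges_sub_nbhd {S : {set V}} {e} :
  e \in edges_of edge S -> edge e \subset nbhd edge S.
Proof.
rewrite inE => /existsP [v /andP [vS ve]].
apply/subsetP => u ue; rewrite inE; apply/existsP; exists e.
by apply/existsP; exists v; rewrite vS ue ve.
Qed.

Definition inv (VL : {set V}) (EL : {set E}) (X : {set V}) : Prop :=
  [/\ Rs \subset VL, edges_of edge Rs \subset EL, edges_of edge X \subset EL
    & forall e, e \in EL -> edge e \subset VL].

Lemma final VL EL X SL :
  inv VL EL X -> local_argmin edge w Rs alpha eps VL EL SL ->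
  (SL :&: ~: Rs) :\: X = set0 ->
  forall T, Hstcut edge w Rs alpha eps SL <= Hstcut edge w Rs alpha eps T.
Proof.
move=> [sRV sER sEX sEV] [sSV Hmin] Hstop T.
have a0 : 0 <= alpha by exact: ltW.
have ae0 : 0 <= alpha * eps by apply: mulr_ge0; exact: ltW.
have -> : Hstcut edge w Rs alpha eps SL = Lstcut edge w Rs alpha eps VL EL SL.
  have hE : hcut edge w SL = \sum_(e in EL) w e (edge e :&: SL).
    rewrite /hcut (bigID (mem EL)) /= [X in _ + X]big1 ?addr0 // => e eEL.
    have -> : edge e :&: SL = set0.
      apply/setP => v; rewrite !inE; apply/negbTE/andP => [[ve vS]].
      case vR: (v \in Rs).
        move/negP: eEL; apply; apply: (subsetP sER); rewrite inE.
        by apply/existsP; exists v; rewrite vR ve.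
      have vX : v \in X.
        apply/negPn/negP => vX.
        have : v \in (SL :&: ~: Rs) :\: X by rewrite !inE vX vS vR.
        by rewrite Hstop inE.
      move/negP: eEL; apply; apply: (subsetP sEX); rewrite inE.
      by apply/existsP; exists v; rewrite vX ve.
    by case: (hw e).
  have h1 : vol edge w (~: SL :&: Rs) = \sum_(v in VL :&: Rs :\: SL) deg edge w v.
    apply: eq_bigl => v; rewrite !inE.
    case vR: (v \in Rs); rewrite /= ?andbT ?andbF //; by rewrite (subsetP sRV v) ?vR // andbT.
  have h2 : vol edge w (SL :&: ~: Rs) = \sum_(v in VL :&: ~: Rs :&: SL) deg edge w v.
    apply: eq_bigl => v; rewrite !inE.
    case vS: (v \in SL); last by rewrite !andbF.
    by rewrite (subsetP sSV) // andbT.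
  by rewrite /Hstcut /Lstcut hE h1 h2.
apply: (le_trans (Hmin (T :&: VL) (subsetIr _ _))).
rewrite /Hstcut /Lstcut /hcut /vol.
apply: lerD; [apply: lerD|].
- rewrite [X in _ <= X](bigID (mem EL)) /=.
  apply: ler_wpDr.
    apply: sumr_ge0 => e _; case: (hw e) => h _ _ _; apply: h; exact: subsetIl.
  apply: ler_sum => e eEL.
  suff -> : edge e :&: (T :&: VL) = edge e :&: T by [].
  by rewrite setIA; apply/setIidPl; apply: subset_trans (subsetIl _ _) (sEV e eEL).
- apply: ler_wpM2l => //; apply: sum_sub_le; last exact: deg_ge0.
  by apply/subsetP => v; rewrite !inE; case: (v \in T); case: (v \in Rs); case: (v \in VL).
- apply: ler_wpM2l => //; apply: sum_sub_le; last exact: deg_ge0.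
  by apply/subsetP => v; rewrite !inE; case: (v \in T); case: (v \in Rs); case: (v \in VL).
Qed.

Lemma alg2_ok VL EL X SL :
  alg2_returns edge w Rs alpha eps VL EL X SL -> inv VL EL X ->
  forall T, Hstcut edge w Rs alpha eps SL <= Hstcut edge w Rs alpha eps T.
Proof.
elim=> {VL EL X SL} [VL EL X SL Hm Hs Hi|VL EL X SL SL' Hm Hn _ IH Hi].
  exact: final Hi Hm Hs.
apply: IH; case: Hi => sRV sER sEX sEV; split.
- exact: subset_trans sRV (subsetUl _ _).
- exact: subset_trans sER (subsetUl _ _).
- apply/subsetP => e; rewrite !inE => /existsP [v /andP [vX ve]].
  move: vX; rewrite !inE => /orP [vX|vN].
    apply/orP; left; apply: (subsetP sEX); rewrite inE.
    by apply/existsP; exists v; rewrite vX ve.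
  apply/orP; right; apply/existsP; exists v; rewrite ve andbT.
  by rewrite !inE in vN *.
- move=> e; rewrite in_setU => /orP [eEL|eN].
    exact: subset_trans (sEV e eEL) (subsetUl _ _).
  exact: subset_trans (edges_sub_nbhd eN) (subsetUr _ _).
Qed.

End Proof.

Theorem theorem2 (R : realFieldType) (V E : finType) (edge : E -> {set V})
    (w : E -> {set V} -> R) (Rs : {set V}) (eps alpha : R)
    (hw : splitting_functions edge w) (heps : 0 < eps) (halpha : 0 < alpha)
    (SL : {set V}) :
  alg2_output edge w Rs alpha eps SL ->
  forall S : {set V}, Hstcut edge w Rs alpha eps SL <= Hstcut edge w Rs alpha eps S.
Proof.
rewrite /alg2_output => H; apply: (@alg2_ok _ _ _ _ _ Rs eps alpha hw heps halpha _ _ _ _ H); split.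
- exact: subsetUl.
- exact: subxx.
- by apply/subsetP => e; rewrite inE => /existsP [v]; rewrite inE.
- move=> e eE; exact: subset_trans (@edges_sub_nbhd _ _ edge _ _ eE) (subsetUr _ _).
Qed.
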